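(* Fix an integer $M\ge2$ and constants $T_s,L_{s,d},L_{s,r},L_{r,d}>0$, $\delta\in(0,1]$, $\varrho\in(0,1)$. Put $g_{s,d}=\sin^2(\pi/M)T_sL_{s,d}$ and $g_{r,d}=\sin^2(\pi/M)T_sL_{s,r}L_{r,d}$. For $\bar\gamma>0$ set $\bar\gamma_{s,r}=\bar\gamma_{s,d}=\bar\gamma_{r,d}=P_s/N_0=\bar\gamma$, let $\epsilon$ be defined by $\bar\gamma^{ID}_{s,r}=\frac{2(1-\varrho)T_sL_{s,r}}{2-\varrho}\bar\gamma$ and $$\epsilon=\frac{1}{2(1+\bar\gamma^{ID}_{s,r})}\ (M=2),\qquad \epsilon=1.03\sqrt{\tfrac{1+\cos\frac{\pi}{M}}{2\cos\frac{\pi}{M}}}\Big[1-\sqrt{\tfrac{(1-\cos\frac{\pi}{M})\bar\gamma^{ID}_{s,r}}{1+(1-\cos\frac{\pi}{M})\bar\gamma^{ID}_{s,r}}}\Big]\ (M>2),$$ and $\eta=\ln\frac{(1-\epsilon)(M-1)}{\epsilon}$. Define $$a_1=\frac{\sqrt\pi\,(2g_{s,d})^{-1/4}}{4\bar\gamma}\Big(\frac{g_{s,d}}2+\bar\gamma^{-1}\Big)^{-3/4},\quad b_1=\frac14+\frac{\sqrt{g_{s,d}/2+\bar\gamma^{-1}}}{2\sqrt{2g_{s,d}}},$$ $$a_2=\frac{2\bar\gamma}{\delta g_{r,d}(g_{s,d}\bar\gamma+2)\bar\gamma^2},\quad b_2=\frac{\delta g_{r,d}\bar\gamma^2}{2\bar\gamma},$$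 $$Z_1=a_1\sqrt{2\eta}\,e^{-2b_1\eta},\quad Z_2=\frac{a_2}{\varrho}\ln(1+b_2\varrho),\quad Z_3=e^{\eta}Z_1,$$ $$\mathcal P_C=(1-\epsilon)(Z_1+Z_2),\qquad \mathcal P_E=\frac{\epsilon Z_3}{M-1}+\frac{\epsilon}{g_{s,d}\bar\gamma+2}.$$ Then $\mathcal P_C+\mathcal P_E$ (which is well defined and positive for all sufficiently large $\bar\gamma$) satisfies $$\lim_{\bar\gamma\to\infty}\frac{\ln(\mathcal P_C+\mathcal P_E)}{\ln\bar\gamma}=-2,$$ i.e. the diversity order is two.
   Context: $\mathcal P_C+\mathcal P_E$ is the paper's closed-form approximate average symbol error rate of its proposed detector at the destination of a three-node SWIPT-enabled differential decode-and-forward relay network with $M$-DPSK and power splitting ratio $\varrho$ at the relay, under Rayleigh fading with average SNRs $\bar\gamma_{s,r},\bar\gamma_{s,d},\bar\gamma_{r,d}$ (all set equal to $\bar\gamma$, with unit-mean channel gains so that $P_s/N_0=\bar\gamma$). *)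

(* Defs.v *)
From Stdlib Require Import Reals.
From Coquelicot Require Import Coquelicot.
Open Scope R_scope.

Section SER.
Variables (M : nat) (Ts Lsd Lsr Lrd delta rho : R).

Definition s2 : R := (sin (PI / INR M)) ^ 2.
Definition g_sd : R := s2 * Ts * Lsd.
Definition g_rd : R := s2 * Ts * Lsr * Lrd.
Definition cM : R := cos (PI / INR M).

Definition gamma_ID (g : R) : R := 2 * (1 - rho) * Ts * Lsr / (2 - rho) * g.

Definition eps (g : R) : R :=
  if Nat.eqb M 2 then 1 / (2 * (1 + gamma_ID g))
  else 1.03 * sqrt ((1 + cM) / (2 * cM)) *
       (1 - sqrt ((1 - cM) * gamma_ID g / (1 + (1 - cM) * gamma_ID g))).

Definition eta_arg (g : R) : R := (1 - eps g) * (INR M - 1) / eps g.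
Definition eta (g : R) : R := ln (eta_arg g).

Definition a1 (g : R) : R :=
  sqrt PI * Rpower (2 * g_sd) (-(1/4)) / (4 * g) * Rpower (g_sd / 2 + / g) (-(3/4)).
Definition b1 (g : R) : R := 1/4 + sqrt (g_sd / 2 + / g) / (2 * sqrt (2 * g_sd)).
Definition a2 (g : R) : R := 2 * g / (delta * g_rd * (g_sd * g + 2) * g ^ 2).
Definition b2 (g : R) : R := delta * g_rd * g ^ 2 / (2 * g).

Definition Z1 (g : R) : R := a1 g * sqrt (2 * eta g) * exp (- (2 * b1 g * eta g)).
Definition Z2 (g : R) : R := a2 g / rho * ln (1 + b2 g * rho).
Definition Z3 (g : R) : R := exp (eta g) * Z1 g.

Definition P_C (g : R) : R := (1 - eps g) * (Z1 g + Z2 g).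
Definition P_E (g : R) : R := eps g * Z3 g / (INR M - 1) + eps g / (g_sd * g + 2).

Definition SER (g : R) : R := P_C g + P_E g.
End SER.

(* Main.v *)
Require Import Defs.
From Stdlib Require Import Reals Lra Psatz.
From Coquelicot Require Import Coquelicot.
Open Scope R_scope.

Lemma sqrt_bounds y : 0 <= y <= 1 -> (1 - y)/2 <= 1 - sqrt y <= 1 - y.
Proof.
  intros [h0 h1].
  pose proof (sqrt_sqrt y h0) as hs. pose proof (sqrt_pos y) as hp.
  assert (sqrt y <= 1) by (rewrite <- sqrt_1; apply sqrt_le_1_alt; lra).
  split; nra.
Qed.

Lemma INR_M_ge2 M : (2 <= M)%nat -> 2 <= INR M.
Proof. intros h. apply le_INR in h. simpl in h. lra. Qed.

Lemma s2_pos M : (2 <= M)%nat -> 0 < s2 M.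
Proof.
  intros h. unfold s2. pose proof (INR_M_ge2 M h). pose proof PI_RGT_0.
  assert (0 < sin (PI / INR M)).
  { apply sin_gt_0. apply Rdiv_lt_0_compat; lra.
    apply Rmult_lt_reg_r with (INR M); [lra|]. unfold Rdiv. rewrite Rmult_assoc, Rinv_l by lra. nra. }
  simpl; nra.
Qed.

Lemma cM_bounds M : (3 <= M)%nat -> 0 < cM M < 1.
Proof.
  intros h. apply le_INR in h. simpl in h. unfold cM. pose proof PI_RGT_0.
  assert (hx : 0 < PI / INR M < PI/2).
  { split. apply Rdiv_lt_0_compat; lra.
    apply Rmult_lt_reg_r with (INR M); [lra|]. unfold Rdiv. rewrite Rmult_assoc, Rinv_l by lra. nra. }
  assert (hc : 0 < cos (PI / INR M)) by (apply cos_gt_0; lra).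
  assert (hsn : 0 < sin (PI / INR M)) by (apply sin_gt_0; lra).
  pose proof (sin2_cos2 (PI / INR M)) as e. unfold Rsqr in e.
  split; nra.
Qed.

Lemma eps_bounds M Ts Lsr rho : (2 <= M)%nat -> 0 < Ts -> 0 < Lsr -> 0 < rho < 1 ->
  exists e1 e2 g1, 0 < e1 /\ 0 < e2 /\ 0 < g1 /\
   forall g, g1 < g -> e1 / g <= eps M Ts Lsr rho g <= e2 / g.
Proof.
  intros hM hTs hLsr hrho.
  set (c := 2 * (1 - rho) * Ts * Lsr / (2 - rho)).
  assert (hc : 0 < c).
  { unfold c. apply Rdiv_lt_0_compat; [|lra]. apply Rmult_lt_0_compat; [|lra].
    apply Rmult_lt_0_compat; [|lra]. lra. }
  assert (hg : forall g, gamma_ID Ts Lsr rho g = c * g) by reflexivity.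
  unfold eps. destruct (Nat.eqb M 2) eqn:E.
  - exists (/(4*c)), (/(2*c)), (/c). split; [apply Rinv_0_lt_compat; lra|].
    split; [apply Rinv_0_lt_compat; lra|]. split; [apply Rinv_0_lt_compat; lra|].
    intros g hg1. rewrite hg.
    assert (hcg : 1 < c * g).
    { apply Rmult_lt_compat_l with (r:=c) in hg1; [|lra]. rewrite Rinv_r in hg1; lra. }
    assert (0 < g) by nra.
    replace (/ (4 * c) / g) with (/ (4 * (c*g))) by (field; lra).
    replace (/ (2 * c) / g) with (/ (2 * (c*g))) by (field; lra).
    replace (1 / (2 * (1 + c * g))) with (/ (2 * (1 + c*g))) by (field; lra).
    split; apply Rinv_le_contravar; nra.
  - apply Nat.eqb_neq in E. assert (h3 : (3 <= M)%nat) by lia.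
    destruct (cM_bounds M h3) as [hc0 hc1].
    set (k := 1.03 * sqrt ((1 + cM M) / (2 * cM M))).
    assert (hk : 0 < k).
    { unfold k. apply Rmult_lt_0_compat; [lra|]. apply sqrt_lt_R0.
      apply Rdiv_lt_0_compat; lra. }
    set (d := (1 - cM M) * c).
    assert (hd : 0 < d) by (unfold d; nra).
    exists (k/(4*d)), (k/d), (/d).
    split; [apply Rdiv_lt_0_compat; lra|].
    split; [apply Rdiv_lt_0_compat; lra|]. split; [apply Rinv_0_lt_compat; lra|].
    intros g hg1. rewrite hg.
    assert (hdg : 1 < d * g).
    { apply Rmult_lt_compat_l with (r:=d) in hg1; [|lra]. rewrite Rinv_r in hg1; lra. }
    assert (hgp : 0 < g) by nra.
    replace ((1 - cM M) * (c * g)) with (d * g) by (unfold d; ring).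
    set (y := d * g / (1 + d * g)).
    assert (hy : 0 <= y <= 1).
    { unfold y. split. apply Rdiv_le_0_compat; lra.
      apply Rmult_le_reg_r with (1 + d*g); [lra|]. field_simplify; lra. }
    assert (e1y : 1 - y = / (1 + d * g)) by (unfold y; field; lra).
    destruct (sqrt_bounds y hy) as [b1 b2]. rewrite e1y in b1, b2.
    fold k.
    assert (/ (1 + d*g) <= / (d * g)) by (apply Rinv_le_contravar; lra).
    assert (/ (4 * (d * g)) <= / (1 + d*g) / 2).
    { unfold Rdiv. rewrite <- Rinv_mult. apply Rinv_le_contravar; lra. }
    split.
    + replace (k / (4 * d) / g) with (k * / (4 * (d*g))) by (field; lra).
      apply Rmult_le_compat_l; lra.
    + replace (k / d / g) with (k * / (d*g)) by (field; lra).
      apply Rmult_le_compat_l; lra.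
Qed.
Lemma exp_le_mono x y : x <= y -> exp x <= exp y.
Proof. intros h. destruct (Rle_lt_or_eq_dec x y h) as [l|e]. left; apply exp_increasing; auto. subst; lra. Qed.

Lemma prod3_le a b c x y z : 0 <= a <= x -> 0 <= b <= y -> 0 <= c <= z -> 0 <= a*b*c <= x*y*z.
Proof.
  intros. split. apply Rmult_le_pos; [apply Rmult_le_pos|]; lra.
  apply Rmult_le_compat; try lra. apply Rmult_le_pos; lra. apply Rmult_le_compat; lra.
Qed.

Lemma Rpower_pos x y : 0 < Rpower x y.
Proof. unfold Rpower; apply exp_pos. Qed.

Lemma SER_bounds M Ts Lsd Lsr Lrd delta rho :
  (2 <= M)%nat -> 0 < Ts -> 0 < Lsd -> 0 < Lsr -> 0 < Lrd -> 0 < delta <= 1 -> 0 < rho < 1 ->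
  exists A B g0, 0 < A /\ 0 < B /\ 3 <= g0 /\ forall g, g0 < g ->
    0 < eps M Ts Lsr rho g < 1 /\ 0 < eta M Ts Lsr rho g /\
    A * / g^2 <= SER M Ts Lsd Lsr Lrd delta rho g <= B * ln g * / g^2.
Proof.
  intros hM hTs hLsd hLsr hLrd hdelta hrho.
  destruct (eps_bounds M Ts Lsr rho hM hTs hLsr hrho) as (e1 & e2 & g1 & he1 & he2 & hg1 & heps).
  pose proof (s2_pos M hM) as hs2.
  set (gsd := g_sd M Ts Lsd). set (grd := g_rd M Ts Lsr Lrd).
  assert (hgsd : 0 < gsd) by (unfold gsd, g_sd; pose proof (Rmult_lt_0_compat _ _ hs2 hTs); apply Rmult_lt_0_compat; lra).
  assert (hgrd : 0 < grd) by (unfold grd, g_rd; pose proof (Rmult_lt_0_compat _ _ hs2 hTs); pose proof (Rmult_lt_0_compat _ _ H hLsr); apply Rmult_lt_0_compat; lra).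
  set (m := INR M - 1). assert (hm : 1 <= m) by (unfold m; pose proof (INR_M_ge2 M hM); lra).
  set (K := 1 + delta * grd * rho / 2).
  assert (hdgr : 0 < delta * grd * rho) by (apply Rmult_lt_0_compat; [apply Rmult_lt_0_compat|]; lra).
  set (A1 := sqrt PI * Rpower (2 * gsd) (-(1/4)) / 4 * Rpower (gsd/2) (-(3/4))).
  assert (hA1 : 0 < A1).
  { unfold A1. pose proof (Rpower_pos (2*gsd) (-(1/4))). pose proof (Rpower_pos (gsd/2) (-(3/4))).
    pose proof (sqrt_lt_R0 PI PI_RGT_0). apply Rmult_lt_0_compat; [|lra]; apply Rdiv_lt_0_compat; [|lra]; apply Rmult_lt_0_compat; lra. }
  set (C1 := A1 * 5 * (4 * e2 / 3)).
  set (C2 := 2 / (delta * grd * gsd) / rho * 2).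
  set (C3 := e2 / gsd).
  set (A := 3/4 * (2 / (delta * grd * (gsd + 2))) / rho).
  exists A, (2*C1 + C2 + C3).
  exists (Rmax 3 (Rmax g1 (Rmax (4*e2) (Rmax (m/e1) (Rmax K (4/(delta*grd*rho))))))).

  assert (hA : 0 < A).
  { unfold A. apply Rdiv_lt_0_compat; [|lra]. apply Rmult_lt_0_compat; [lra|].
    apply Rdiv_lt_0_compat; [lra|]. apply Rmult_lt_0_compat; [apply Rmult_lt_0_compat|]; lra. }
  assert (hC1 : 0 < C1) by (unfold C1; apply Rmult_lt_0_compat; [|lra]; lra).
  assert (hC2 : 0 < C2).
  { unfold C2. apply Rmult_lt_0_compat; [|lra]. apply Rdiv_lt_0_compat; [|lra].
    apply Rdiv_lt_0_compat; [lra|]. apply Rmult_lt_0_compat; [apply Rmult_lt_0_compat|]; lra. }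
  assert (hC3 : 0 < C3) by (unfold C3; apply Rdiv_lt_0_compat; lra).
  split; [exact hA|]. split; [lra|]. split; [apply Rmax_l|].
  intros g hg.
  pose proof (Rle_lt_trans _ _ _ (Rmax_l _ _) hg) as g3.
  pose proof (Rle_lt_trans _ _ _ (Rmax_r _ _) hg) as hg'. clear hg.
  pose proof (Rle_lt_trans _ _ _ (Rmax_l _ _) hg') as gg1.
  pose proof (Rle_lt_trans _ _ _ (Rmax_r _ _) hg') as hg''. clear hg'.
  pose proof (Rle_lt_trans _ _ _ (Rmax_l _ _) hg'') as ge2.
  pose proof (Rle_lt_trans _ _ _ (Rmax_r _ _) hg'') as h4. clear hg''.
  pose proof (Rle_lt_trans _ _ _ (Rmax_l _ _) h4) as gme1.
  pose proof (Rle_lt_trans _ _ _ (Rmax_r _ _) h4) as h5. clear h4.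
  pose proof (Rle_lt_trans _ _ _ (Rmax_l _ _) h5) as gK.
  pose proof (Rle_lt_trans _ _ _ (Rmax_r _ _) h5) as gdgr. clear h5.
  assert (gpos : 0 < g) by lra.
  assert (lng1 : 1 <= ln g).
  { rewrite <- (ln_exp 1). apply ln_le. apply exp_pos. pose proof exp_le_3. lra. }
  set (w := / g^2).
  assert (hw : 0 < w) by (unfold w; apply Rinv_0_lt_compat; nra).
  specialize (heps g gg1).
  set (E := eps M Ts Lsr rho g) in *.
  assert (hE1 : e1 / g <= E) by lra. assert (hE2 : E <= e2/g) by lra.
  assert (e1g : 0 < e1 / g) by (apply Rdiv_lt_0_compat; lra).
  assert (hE14 : E <= 1/4).
  { apply Rle_trans with (e2/g); [lra|]. apply Rmult_le_reg_r with g; [lra|].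
    field_simplify; lra. }
  assert (hEpos : 0 < E) by lra.
  set (ea := (1 - E) * m / E).
  assert (hea_eta : eta M Ts Lsr rho g = ln ea) by reflexivity.
  assert (ea_lo : 3 * g / (4 * e2) <= ea).
  { unfold ea. apply Rle_trans with ((3/4) / E).
    - replace (3 * g / (4 * e2)) with ((3/4) / (e2/g)) by (field; lra).
      unfold Rdiv. apply Rmult_le_compat_l; [lra|]. apply Rinv_le_contravar; lra.
    - unfold Rdiv. apply Rmult_le_compat_r. left; apply Rinv_0_lt_compat; lra. nra. }
  assert (ea_gt1 : 1 < ea).
  { apply Rlt_le_trans with (3 * g / (4 * e2)); [|lra].
    apply Rmult_lt_reg_r with (4*e2); [lra|]. field_simplify; lra. }
  assert (ea_hi : ea <= g * g).
  { unfold ea. apply Rle_trans with (m / E).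
    - unfold Rdiv. apply Rmult_le_compat_r. left; apply Rinv_0_lt_compat; lra. nra.
    - apply Rle_trans with (m / (e1/g)).
      + unfold Rdiv. apply Rmult_le_compat_l; [lra|]. apply Rinv_le_contravar; lra.
      + replace (m / (e1/g)) with (m / e1 * g) by (field; lra). nra. }
  assert (eta_pos : 0 < ln ea) by (rewrite <- ln_1; apply ln_increasing; lra).
  assert (eta_hi : ln ea <= 2 * ln g).
  { apply Rle_trans with (ln (g*g)). apply ln_le; lra. rewrite ln_mult; lra. }
  split; [lra|]. rewrite hea_eta. split; [exact eta_pos|].
  assert (Z1_bd : 0 <= Z1 M Ts Lsd Lsr rho g <= C1 * ln g * w).
  { unfold Z1. rewrite hea_eta.
    assert (ha1 : 0 <= a1 M Ts Lsd g <= A1 / g).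
    { unfold a1. fold gsd.
      pose proof (Rpower_pos (2*gsd) (-(1/4))). pose proof (Rpower_pos (gsd/2 + /g) (-(3/4))).
      pose proof (Rpower_pos (gsd/2) (-(3/4))). pose proof (sqrt_pos PI).
      assert (Rpower (gsd / 2 + / g) (- (3 / 4)) <= Rpower (gsd/2) (-(3/4))).
      { rewrite !Rpower_Ropp. apply Rinv_le_contravar. apply Rpower_pos.
        apply Rle_Rpower_l. lra. split. lra. assert (0 < /g) by (apply Rinv_0_lt_compat; lra). lra. }
      replace (A1 / g) with (sqrt PI * Rpower (2 * gsd) (- (1 / 4)) / (4 * g) * Rpower (gsd/2) (-(3/4)))
        by (unfold A1; field; lra).
      assert (0 <= sqrt PI * Rpower (2 * gsd) (- (1 / 4)) / (4 * g)).
      { apply Rdiv_le_0_compat; [|lra]. apply Rmult_le_pos; lra. }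
      split; [apply Rmult_le_pos; lra|]. apply Rmult_le_compat_l; lra. }
    assert (hb1 : 1/2 <= b1 M Ts Lsd g).
    { unfold b1. fold gsd.
      set (u := gsd/2 + /g).
      assert (hu : gsd/2 < u) by (unfold u; assert (0 < /g) by (apply Rinv_0_lt_compat; lra); lra).
      pose proof (sqrt_sqrt u ltac:(lra)). pose proof (sqrt_sqrt (2*gsd) ltac:(lra)).
      pose proof (sqrt_pos u). pose proof (sqrt_lt_R0 (2*gsd) ltac:(lra)).
      assert (t2 : sqrt (2*gsd) <= 2 * sqrt u) by nra.
      apply Rmult_le_reg_r with (2 * sqrt (2*gsd)); [lra|].
      field_simplify; try lra. }
    assert (hs : 0 <= sqrt (2 * ln ea) <= 5 * ln g).
    { pose proof (sqrt_pos (2 * ln ea)). pose proof (sqrt_sqrt (2*ln ea) ltac:(lra)). nra. }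
    assert (hx : 0 <= exp (- (2 * b1 M Ts Lsd g * ln ea)) <= 4 * e2 / 3 * / g).
    { split. left; apply exp_pos.
      apply Rle_trans with (exp (- ln ea)). apply exp_le_mono. nra.
      rewrite exp_Ropp, exp_ln by lra.
      apply Rle_trans with (/ (3 * g / (4 * e2))). apply Rinv_le_contravar; [|lra].
      apply Rmult_lt_reg_r with (4*e2); [lra|]. field_simplify; lra.
      right; field; lra. }
    pose proof (prod3_le _ _ _ _ _ _ ha1 hs hx) as P.
    replace (C1 * ln g * w) with (A1 / g * (5 * ln g) * (4 * e2 / 3 * / g)); [exact P|].
    unfold C1, w. field. lra. }
  assert (Z3e : E * Z3 M Ts Lsd Lsr rho g / (INR M - 1) = (1 - E) * Z1 M Ts Lsd Lsr rho g).
  { unfold Z3. rewrite hea_eta, exp_ln by lra. fold m. unfold ea. field. lra. }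
  assert (Z2_bd : 2 / (delta * grd * (gsd + 2)) / rho * w <= Z2 M Ts Lsd Lsr Lrd delta rho g <= C2 * ln g * w).
  { unfold Z2. fold gsd.
    assert (ea2 : a2 M Ts Lsd Lsr Lrd delta g = 2 / (delta * grd) * / ((gsd * g + 2) * g)).
    { unfold a2. fold gsd grd. field. repeat split; nra. }
    assert (eb2 : b2 M Ts Lsr Lrd delta g = delta * grd * g / 2).
    { unfold b2. fold grd. field. lra. }
    rewrite ea2, eb2.
    set (q := 1 + delta * grd * g / 2 * rho).
    assert (q3 : exp 1 <= q).
    { pose proof exp_le_3. unfold q.
      assert (4 <= delta*grd*rho * g).
      { apply Rmult_lt_compat_l with (r := delta*grd*rho) in gdgr; [|lra].
        replace (delta * grd * rho * (4 / (delta * grd * rho))) with 4 in gdgr by (field; lra). lra. }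
      nra. }
    assert (lq1 : 1 <= ln q) by (rewrite <- (ln_exp 1); apply ln_le; [apply exp_pos|lra]).
    assert (lq2 : ln q <= 2 * ln g).
    { apply Rle_trans with (ln (g*g)). apply ln_le. pose proof (exp_pos 1); lra.
      unfold q. unfold K in gK. nra. rewrite ln_mult; lra. }
    assert (hk : 0 < 2 / (delta * grd)) by (apply Rdiv_lt_0_compat; [lra|]; apply Rmult_lt_0_compat; lra).
    assert (i1 : / ((gsd + 2) * g * g) <= / ((gsd * g + 2) * g)) by (apply Rinv_le_contravar; nra).
    assert (i2 : / ((gsd * g + 2) * g) <= / (gsd * g * g)) by (apply Rinv_le_contravar; nra).
    assert (0 < / ((gsd * g + 2) * g)) by (apply Rinv_0_lt_compat; nra).
    split.
    - apply Rle_trans with (2 / (delta * grd) * / ((gsd * g + 2) * g) / rho * 1).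
      + replace (2 / (delta * grd * (gsd + 2)) / rho * w) with
          (2 / (delta * grd) * / ((gsd + 2) * g * g) / rho * 1) by (unfold w; field; repeat split; nra).
        unfold Rdiv. apply Rmult_le_compat_r; [lra|]. apply Rmult_le_compat_r.
        left; apply Rinv_0_lt_compat; lra. apply Rmult_le_compat_l; lra.
      + apply Rmult_le_compat_l; [|lra]. apply Rdiv_le_0_compat; [|lra]. apply Rmult_le_pos; lra.
    - apply Rle_trans with (2 / (delta * grd) * / (gsd * g * g) / rho * (2 * ln g)).
      + apply Rmult_le_compat; try lra.
        apply Rdiv_le_0_compat; [|lra]. apply Rmult_le_pos; lra.
        unfold Rdiv. apply Rmult_le_compat_r. left; apply Rinv_0_lt_compat; lra.
        apply Rmult_le_compat_l; lra.
      + right. unfold C2, w. field. repeat split; nra. }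
  assert (L_bd : 0 <= E / (gsd * g + 2) <= C3 * w).
  { split. apply Rdiv_le_0_compat; nra.
    apply Rle_trans with ((e2/g) / (gsd * g)).
    - unfold Rdiv. apply Rmult_le_compat; try lra.
      left; apply Rinv_0_lt_compat; nra. apply Rinv_le_contravar; nra.
    - right. unfold C3, w. field. split; lra. }
  unfold SER, P_C, P_E. fold E. rewrite Z3e.
  set (z1 := Z1 M Ts Lsd Lsr rho g) in *. set (z2 := Z2 M Ts Lsd Lsr Lrd delta rho g) in *.
  assert (C3 * w <= C3 * ln g * w) by nra.
  assert (eA : 2 / (delta * grd * (gsd + 2)) / rho = A * (4/3)).
  { unfold A. field. repeat split; nra. }
  rewrite eA in Z2_bd.
  assert (z1 * E >= 0) by nra.
  assert (0 <= z2) by nra.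
  assert (z2 * E >= 0) by nra.
  fold gsd. set (lt := E / (gsd * g + 2)) in *.
  assert (E * z2 <= z2 / 4) by nra.
  split; nra.
Qed.

Lemma ln_le_2sqrt y : 0 < y -> ln y <= 2 * sqrt y.
Proof.
  intros hy. pose proof (sqrt_lt_R0 y hy) as hs. pose proof (sqrt_sqrt y (Rlt_le _ _ hy)) as e.
  rewrite <- e at 1. rewrite ln_mult by lra.
  pose proof (exp_ineq1_le (ln (sqrt y))) as h. rewrite exp_ln in h by lra. lra.
Qed.

Theorem mainTheorem3 (M : nat) (Ts Lsd Lsr Lrd delta rho : R)
  (hM : (2 <= M)%nat) (hTs : 0 < Ts) (hLsd : 0 < Lsd) (hLsr : 0 < Lsr)
  (hLrd : 0 < Lrd) (hdelta : 0 < delta <= 1) (hrho : 0 < rho < 1) :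
  (exists g0 : R, forall g : R, g0 < g ->
      0 < eps M Ts Lsr rho g < 1 /\
      0 < eta M Ts Lsr rho g /\
      0 < SER M Ts Lsd Lsr Lrd delta rho g) /\
  is_lim (fun g => ln (SER M Ts Lsd Lsr Lrd delta rho g) / ln g) p_infty (-2).
Proof.
  destruct (SER_bounds M Ts Lsd Lsr Lrd delta rho hM hTs hLsd hLsr hLrd hdelta hrho)
    as (A & B & g0 & hA & hB & hg0 & H).
  split.
  { exists g0. intros g hg. destruct (H g hg) as (h1 & h2 & h3 & h4). repeat split; try lra.
    assert (0 < A * / g^2). { apply Rmult_lt_0_compat; [lra|]. apply Rinv_0_lt_compat. nra. } lra. }
  apply is_lim_spec. intros [e he]. simpl.
  set (L := 1 + Rmax 1 (Rmax (2 * Rabs (ln A) / e) (Rmax (2 * Rabs (ln B) / e) (16 / (e*e))))).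
  exists (Rmax g0 (exp L)). intros g hg.
  pose proof (Rle_lt_trans _ _ _ (Rmax_l _ _) hg) as hg1.
  pose proof (Rle_lt_trans _ _ _ (Rmax_r _ _) hg) as hg2.
  assert (gpos : 0 < g) by lra.
  assert (hlg : L < ln g) by (rewrite <- (ln_exp L); apply ln_increasing; [apply exp_pos|lra]).
  assert (L1 : 1 <= Rmax 1 (Rmax (2 * Rabs (ln A) / e) (Rmax (2 * Rabs (ln B) / e) (16 / (e*e))))) by apply Rmax_l.
  assert (LA : 2 * Rabs (ln A) / e <= Rmax 1 (Rmax (2 * Rabs (ln A) / e) (Rmax (2 * Rabs (ln B) / e) (16 / (e*e))))).
  { eapply Rle_trans; [|apply Rmax_r]. apply Rmax_l. }
  assert (LB : 2 * Rabs (ln B) / e <= Rmax 1 (Rmax (2 * Rabs (ln A) / e) (Rmax (2 * Rabs (ln B) / e) (16 / (e*e))))).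
  { eapply Rle_trans; [|apply Rmax_r]. eapply Rle_trans; [|apply Rmax_r]. apply Rmax_l. }
  assert (L16 : 16 / (e*e) <= Rmax 1 (Rmax (2 * Rabs (ln A) / e) (Rmax (2 * Rabs (ln B) / e) (16 / (e*e))))).
  { eapply Rle_trans; [|apply Rmax_r]. eapply Rle_trans; [|apply Rmax_r]. apply Rmax_r. }
  unfold L in hlg.
  set (l := ln g) in *.
  assert (lA : 2 * Rabs (ln A) < l * e).
  { assert (E1: 2 * Rabs (ln A) = (2 * Rabs (ln A) / e) * e) by (field; lra). rewrite E1. apply Rmult_lt_compat_r; lra. }
  assert (lB : 2 * Rabs (ln B) < l * e).
  { assert (E1: 2 * Rabs (ln B) = (2 * Rabs (ln B) / e) * e) by (field; lra). rewrite E1. apply Rmult_lt_compat_r; lra. }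
  assert (l16 : 16 <= l * (e * e)).
  { assert (16 / (e*e) <= l) by lra.
    apply Rmult_le_compat_r with (r := e*e) in H0; [|nra]. 
    replace (16 / (e * e) * (e * e)) with 16 in H0 by (field; lra). lra. }
  destruct (H g hg1) as (_ & _ & hlo & hhi). fold l in hhi.
  assert (hw : 0 < / g^2) by (apply Rinv_0_lt_compat; nra).
  assert (hAw : 0 < A * / g^2) by (apply Rmult_lt_0_compat; lra).
  assert (lw : ln (/ g^2) = - (2 * l)).
  { rewrite ln_Rinv by nra. replace (g^2) with (g*g) by ring. rewrite ln_mult by lra. unfold l. ring. }
  assert (hlo' : ln A - 2 * l <= ln (SER M Ts Lsd Lsr Lrd delta rho g)).
  { apply Rle_trans with (ln (A * / g^2)). rewrite ln_mult, lw by lra; lra. apply ln_le; lra. }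
  assert (hhi' : ln (SER M Ts Lsd Lsr Lrd delta rho g) <= ln B + 2 * sqrt l - 2 * l).
  { apply Rle_trans with (ln (B * l * / g^2)). apply ln_le; lra.
    rewrite ln_mult by (try apply Rmult_lt_0_compat; lra). rewrite ln_mult by lra. rewrite lw.
    pose proof (ln_le_2sqrt l ltac:(lra)). lra. }
  pose proof (sqrt_lt_R0 l ltac:(lra)) as hs. pose proof (sqrt_sqrt l ltac:(lra)) as hss.
  assert (s4 : 4 <= sqrt l * e).
  { assert (0 < sqrt l * e) by nra. rewrite <- hss in l16.
    destruct (Rle_or_lt 4 (sqrt l * e)) as [h|h]; [exact h|]. nra. }
  assert (s4' : 4 * sqrt l <= l * e) by nra.
  pose proof (Rabs_pos (ln A)). pose proof (Rabs_pos (ln B)).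
  pose proof (Rle_abs (ln B)). pose proof (Rle_abs (- ln A)) as hna. rewrite Rabs_Ropp in hna.
  set (S := ln (SER M Ts Lsd Lsr Lrd delta rho g)) in *.
  replace (S / l - -2) with ((S + 2 * l) / l) by (field; lra).
  apply Rabs_def1.
  - apply Rmult_lt_reg_r with l; [lra|]. unfold Rdiv. rewrite Rmult_assoc, Rinv_l by lra. nra.
  - apply Rmult_lt_reg_r with l; [lra|]. unfold Rdiv. rewrite Rmult_assoc, Rinv_l by lra. nra.
Qed.
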